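(* Let $L$ be a link that is not an unlink. Then for every even $n \ge 2$, $\beta_n(L) \le \beta_{3n+1}(L)$.
   Context: An $n$-crossing ($n\ge 2$) in a link projection is a point where $n$ strands meet, each bisecting the crossing, with the strands assigned distinct levels $1,\dots,n$ (level $1$ on top) recording their heights. An $m$-string $n$-crossing braid is a braid diagram on $m$ strings all of whose crossings are $n$-crossings; each such crossing involves strings in consecutive positions $j,\dots,j+n-1$ and reverses their order. The $n$-crossing braid index $\beta_n(L)$ is the minimum number of strings of an $n$-crossing braid whose closure is isotopic to $L$, with $\beta_n(L)=\infty$ if none exists. *)

(* Defs.v *)
(* Combinatorial model of links via braid
   closures: a link is represented by a braid (m strands, word w); two braid
   closures are isotopic iff the braids are Markov-equivalent (Alexander and
   Markov theorems). *)
From mathcomp Require Import all_boot.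
Set Implicit Arguments. Unset Strict Implicit. Unset Printing Implicit Defensive.

(* A generator (i, true) is sigma_i (crossing of the strands in positions
   i and i+1, 0-based, left strand over); (i, false) is sigma_i^{-1}. *)
Definition gen := (nat * bool)%type.

Definition braid_wf (m : nat) (w : seq gen) : bool :=
  all (fun g : gen => g.1.+1 < m) w.

Inductive braid_rel : seq gen -> seq gen -> Prop :=
| br_cancel i e : braid_rel [:: (i, e); (i, ~~ e)] [::]
| br_far i k e f : i.+1 < k -> braid_rel [:: (i, e); (k, f)] [:: (k, f); (i, e)]
| br_braid i : braid_rel [:: (i, true); (i.+1, true); (i, true)]
                         [:: (i.+1, true); (i, true); (i.+1, true)].

Inductive markov : nat -> seq gen -> nat -> seq gen -> Prop :=
| mk_refl m w : markov m w m w
| mk_sym m w m' w' : markov m w m' w' -> markov m' w' m w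
| mk_trans m w m' w' m'' w'' :
    markov m w m' w' -> markov m' w' m'' w'' -> markov m w m'' w''
| mk_rel m u l r v : braid_wf m (u ++ l ++ v) -> braid_wf m (u ++ r ++ v) ->
    braid_rel l r -> markov m (u ++ l ++ v) m (u ++ r ++ v)
| mk_conj m g w : braid_wf m (g :: w) -> markov m (g :: w) m (rcons w g)
| mk_stab m w e : 0 < m -> braid_wf m w -> markov m w m.+1 (rcons w (m.-1, e)).

Definition is_unlink (m0 : nat) (w0 : seq gen) : Prop :=
  exists2 k, 0 < k & markov k [::] m0 w0.

(* Expansion of a multi-crossing into classical crossings.  The strands in
   positions j, j+1, ..., j+n-1 have levels s`_0, ..., s`_(n-1) (level 1 on
   top); the crossing reverses their order, each pair crossing once, with the
   lower-level (higher) strand over. *)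
Fixpoint bubble (j : nat) (a : nat) (s : seq nat) : seq gen :=
  match s with
  | [::] => [::]
  | b :: s' => (j, a < b) :: bubble j.+1 a s'
  end.

Fixpoint mcross_word (j : nat) (s : seq nat) : seq gen :=
  match s with
  | [::] => [::]
  | a :: s' => bubble j a s' ++ mcross_word j s'
  end.

Definition valid_ncross (n m : nat) (c : nat * seq nat) : bool :=
  (c.1 + n <= m) && perm_eq c.2 (iota 1 n).

Definition ncb_word (cs : seq (nat * seq nat)) : seq gen :=
  flatten [seq mcross_word c.1 c.2 | c <- cs].

Definition ncb_closure (n m : nat) (m0 : nat) (w0 : seq gen) : Prop :=
  exists cs : seq (nat * seq nat),
    [/\ 0 < m, all (valid_ncross n m) cs & markov m (ncb_word cs) m0 w0].

(* Main.v *)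
Require Import Defs.
From mathcomp Require Import all_boot.
From mathcomp Require Import zify.
Set Implicit Arguments. Unset Strict Implicit. Unset Printing Implicit Defensive.


Inductive beq (m : nat) : seq gen -> seq gen -> Prop :=
| beq_refl w : beq m w w
| beq_sym u v : beq m u v -> beq m v u
| beq_trans u v w : beq m u v -> beq m v w -> beq m u w
| beq_step u l r v : braid_wf m (u ++ l ++ v) -> braid_wf m (u ++ r ++ v) ->
    braid_rel l r -> beq m (u ++ l ++ v) (u ++ r ++ v).

Lemma beq_markov m u v : beq m u v -> markov m u m v.
Proof.
elim=> {u v} [w|u v _ IH|u v w _ IH1 _ IH2|u l r v H1 H2 H].
- exact: mk_refl.
- exact: mk_sym.
- exact: mk_trans IH1 IH2.
- exact: mk_rel.
Qed.

Lemma wf_cat m u v : braid_wf m (u ++ v) = braid_wf m u && braid_wf m v.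
Proof. by rewrite /braid_wf all_cat. Qed.

Lemma beq_wf m u v : beq m u v -> braid_wf m u = braid_wf m v.
Proof.
elim=> {u v} [//|u v _ IH|u v w _ IH1 _ IH2|u l r v H1 H2 _].
- by rewrite IH.
- by rewrite IH1.
- by rewrite H1 H2.
Qed.

Lemma beq_cong m x u v y : beq m u v -> braid_wf m x -> braid_wf m y ->
  beq m (x ++ u ++ y) (x ++ v ++ y).
Proof.
move=> H wx wy; elim: H => {u v} [w|u v _ IH|u v w _ IH1 _ IH2|u l r v H1 H2 H].
- exact: beq_refl.
- exact: beq_sym.
- exact: beq_trans IH1 IH2.
- have E : forall z, x ++ (u ++ z ++ v) ++ y = (x ++ u) ++ z ++ (v ++ y).
    by move=> z; rewrite !catA.
  rewrite !E; apply: beq_step => //; rewrite -E !wf_cat wx wy /=.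
  + by rewrite andbT -!wf_cat.
  + by rewrite andbT -!wf_cat.
Qed.

Lemma beq_congl m x u v : beq m u v -> braid_wf m x -> beq m (x ++ u) (x ++ v).
Proof. by move=> H wx; have := beq_cong H wx (isT : braid_wf m [::]); rewrite !cats0. Qed.

Lemma beq_congr m u v y : beq m u v -> braid_wf m y -> beq m (u ++ y) (v ++ y).
Proof. by move=> H wy; exact: (beq_cong (x:=[::]) H). Qed.

Lemma beq_cat m u u' v v' : beq m u u' -> beq m v v' -> braid_wf m u' -> braid_wf m v ->
  beq m (u ++ v) (u' ++ v').
Proof. move=> H1 H2 w1 w2; apply: beq_trans (beq_congr H1 w2) (beq_congl H2 w1). Qed.

Lemma beq_mono m m' u v : beq m u v -> m <= m' -> beq m' u v.
Proof.
move=> H le; elim: H => {u v} [w|u v _ IH|u v w _ IH1 _ IH2|u l r v H1 H2 H].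
- exact: beq_refl.
- exact: beq_sym.
- exact: beq_trans IH1 IH2.
- apply: beq_step => //.
  + by apply: sub_all H1 => g /= /leq_trans; apply.
  + by apply: sub_all H2 => g /= /leq_trans; apply.
Qed.

Definition shiftw (j : nat) (w : seq gen) : seq gen := [seq (g.1 + j, g.2) | g <- w].

Lemma shiftw_cat j u v : shiftw j (u ++ v) = shiftw j u ++ shiftw j v.
Proof. exact: map_cat. Qed.

Lemma shiftw_wf m j w : braid_wf m w -> braid_wf (m + j) (shiftw j w).
Proof. by rewrite /braid_wf all_map; apply: sub_all => g /=; lia. Qed.

Lemma braid_rel_shift j l r : braid_rel l r -> braid_rel (shiftw j l) (shiftw j r).
Proof.
case=> [i e|i k e f H|i] /=.
- exact: br_cancel.
- apply: br_far; lia.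
- rewrite !addSn; exact: br_braid.
Qed.

Lemma beq_shift m j u v : beq m u v -> beq (m + j) (shiftw j u) (shiftw j v).
Proof.
elim=> {u v} [w|u v _ IH|u v w _ IH1 _ IH2|u l r v H1 H2 H].
- exact: beq_refl.
- exact: beq_sym.
- exact: beq_trans IH1 IH2.
- rewrite !shiftw_cat; apply: beq_step; try (rewrite -!shiftw_cat; exact: shiftw_wf).
  exact: braid_rel_shift.
Qed.

Definition flipg (g : gen) : gen := (g.1, ~~ g.2).
Definition invw (w : seq gen) : seq gen := rev (map flipg w).

Lemma beq_cancel m i e u v : i.+1 < m -> braid_wf m u -> braid_wf m v ->
  beq m (u ++ [:: (i, e); (i, ~~ e)] ++ v) (u ++ v).
Proof.
move=> Hi wu wv; apply: (@beq_step m u _ _ v) (br_cancel i e).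
- by rewrite !wf_cat wu wv /= Hi.
- by rewrite !wf_cat wu wv.
Qed.

Lemma beq_invw m u : braid_wf m u -> beq m (u ++ invw u) [::].
Proof.
elim: u => [|g u IH] /=; first by move=> _; exact: beq_refl.
case/andP=> Hg wu.
rewrite /invw /= rev_cons -/(invw u) -cats1.
have E : g :: u ++ invw u ++ [:: flipg g] = [:: g] ++ (u ++ invw u) ++ [:: flipg g].
  by rewrite /= catA.
rewrite E; apply: beq_trans.
  apply: beq_cong (IH wu) _ _; by rewrite /= ?Hg.
clear E; case: g Hg => i e /= Hg.
have := beq_cancel e Hg (isT : braid_wf m [::]) (isT : braid_wf m [::]).
by rewrite /=.
Qed.

Lemma wf_invw m u : braid_wf m u -> braid_wf m (invw u).
Proof. by rewrite /invw /braid_wf all_rev all_map. Qed.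

Lemma beq_rcancel m u v x : beq m (u ++ x) (v ++ x) -> braid_wf m u -> braid_wf m v ->
  braid_wf m x -> beq m u v.
Proof.
move=> H wu wv wx.
have H1 : beq m (u ++ x ++ invw x) u.
  by have := beq_congl (beq_invw wx) wu; rewrite cats0.
have H2 : beq m (v ++ x ++ invw x) v.
  by have := beq_congl (beq_invw wx) wv; rewrite cats0.
apply: beq_trans (beq_sym H1) _; apply: beq_trans H2.
rewrite !catA; apply: beq_congr H _; exact: wf_invw.
Qed.


Lemma invwK u : invw (invw u) = u.
Proof. by rewrite /invw map_rev revK -map_comp map_id_in // => -[i e] _ /=; rewrite /flipg /= negbK. Qed.

Lemma beq_inv m u v : beq m u v -> braid_wf m u -> braid_wf m v -> beq m (invw u) (invw v).
Proof.
move=> H wu wv.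
have wiu := wf_invw wu; have wiv := wf_invw wv.
apply: (@beq_rcancel m _ _ u) => //.
apply: beq_trans.
  have := beq_invw wiu; rewrite invwK; exact.
apply: beq_sym; apply: beq_trans (beq_congl H wiv) _.
by have := beq_invw wiv; rewrite invwK.
Qed.

Lemma beq_far m u v i e k f : i.+1 < k -> k.+1 < m -> braid_wf m u -> braid_wf m v ->
  beq m (u ++ [:: (i, e); (k, f)] ++ v) (u ++ [:: (k, f); (i, e)] ++ v).
Proof.
move=> H1 H2 wu wv; apply: beq_step (br_far e f H1); by rewrite !wf_cat wu wv /= H2 /=; lia.
Qed.

Lemma R1 m i : i.+2 < m ->
  beq m [:: (i, false); (i.+1, false); (i, false)] [:: (i.+1, false); (i, false); (i.+1, false)].
Proof.
move=> Hm.
have H : beq m [:: (i, true); (i.+1, true); (i, true)] [:: (i.+1, true); (i, true); (i.+1, true)].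
  by apply: (@beq_step m [::] _ _ [::]) (br_braid i) => /=; rewrite Hm; lia.
have := beq_inv H; rewrite /invw /=; apply => /=; lia.
Qed.

Lemma R2 m i : i.+2 < m ->
  beq m [:: (i, true); (i.+1, false); (i, false)] [:: (i.+1, false); (i, false); (i.+1, true)].
Proof.
move=> Hm.
have w0 : braid_wf m [::] by [].
have wX : braid_wf m [:: (i.+1, false); (i, true); (i.+1, true)] by rewrite /= Hm; lia.
apply: (@beq_rcancel m _ _ [:: (i.+1, false); (i, true); (i.+1, true)]); try (rewrite /= Hm; lia).
apply: (@beq_trans _ _ [::]); last first.
  apply: beq_sym; have := beq_invw (u := [:: (i.+1, false); (i, false); (i.+1, true)]) (m := m).
  by rewrite /invw /= /flipg /=; apply; rewrite /= Hm; lia.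
apply: (@beq_trans _ _ ([:: (i, true)] ++ [:: (i, false); (i.+1, false); (i, false)] ++ [:: (i, true); (i.+1, true)])).
  apply: (@beq_cong m [:: (i, true)] [:: (i.+1, false); (i, false); (i.+1, false)] [:: (i, false); (i.+1, false); (i, false)] [:: (i, true); (i.+1, true)]);
    [apply: beq_sym; exact: R1 | rewrite /=; lia | rewrite /= Hm; lia].
rewrite /=.
apply: beq_trans (@beq_cancel m i true [::] [:: (i.+1, false); (i, false); (i, true); (i.+1, true)] _ w0 _) _; try (rewrite /= ?Hm; lia).
apply: beq_trans (@beq_cancel m i false [:: (i.+1, false)] [:: (i.+1, true)] _ _ _) _; try (rewrite /= ?Hm; lia).
apply: beq_trans (@beq_cancel m i.+1 false [::] [::] _ _ _) _; try (rewrite /= ?Hm; lia).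
exact: beq_refl.
Qed.

Fixpoint mv (p : nat) : seq gen :=
  if p is p'.+1 then (p', false) :: mv p' else [::].

Lemma mv_wf m p : p < m -> braid_wf m (mv p).
Proof. elim: p => //= p IH H; rewrite H IH //; lia. Qed.

Lemma mv_far m p i e : p < i -> i.+1 < m ->
  beq m ((i, e) :: mv p) (mv p ++ [:: (i, e)]).
Proof.
elim: p => [|p IH] H1 H2 /=; first exact: beq_refl.
apply: (@beq_trans _ _ ((p,false) :: (i,e) :: mv p)).
  apply: beq_sym; apply: (@beq_far m [::] (mv p)); rewrite ?mv_wf //; lia.
apply: (@beq_congl m [:: (p, false)]); [apply: IH; lia| rewrite /=; lia].
Qed.

Lemma mv_near m p i e : i.+1 < p -> p < m ->
  beq m ((i, e) :: mv p) (mv p ++ [:: (i.+1, e)]).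
Proof.
elim: p => [|p IH] H1 H2 //=.
case: (ltngtP i.+1 p) => Hp.
- apply: (@beq_trans _ _ ((p,false) :: (i,e) :: mv p)).
    apply: (@beq_far m [::] (mv p)); rewrite ?mv_wf //; lia.
  apply: (@beq_congl m [:: (p, false)]); [apply: IH; lia| rewrite /=; lia].
- lia.
- subst p => /=.
  apply: (@beq_trans _ _ ([:: (i.+1, false); (i, false); (i.+1, e)] ++ mv i)).
    have := (@beq_congr m [:: (i, e); (i.+1, false); (i, false)] [:: (i.+1, false); (i, false); (i.+1, e)] (mv i)).
    apply; last by apply: mv_wf; lia.
    by clear IH; case: e; [apply: R2| apply: R1]; lia.
  apply: (@beq_congl m [:: (i.+1, false); (i, false)]); last by rewrite /=; lia.
  apply: mv_far; lia.
Qed.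


Definition swap (c : seq nat) (i : nat) : seq nat :=
  take i c ++ nth 0 c i.+1 :: nth 0 c i :: drop i.+2 c.
Definition cons_ok (c : seq nat) (g : gen) : bool :=
  (g.1.+1 < size c) && (g.2 == (nth 0 c g.1 < nth 0 c g.1.+1)).
Fixpoint lay (c : seq nat) (w : seq gen) : bool :=
  if w is g :: w' then cons_ok c g && lay (swap c g.1) w' else true.
Fixpoint run (c : seq nat) (w : seq gen) : seq nat :=
  if w is g :: w' then run (swap c g.1) w' else c.

Lemma swap_cat pre x y rest : swap (pre ++ x :: y :: rest) (size pre) = pre ++ y :: x :: rest.
Proof.
rewrite /swap take_size_cat // !nth_cat ltnn ltnNge leqnSn /= subnn subSnn /=.
suff -> : drop (size pre).+2 (pre ++ [:: x, y & rest]) = rest by [].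
by elim: pre => [|a pre IH] /=; [exact: drop0 | exact: IH].
Qed.

Lemma cons_ok_inv c i e : cons_ok c (i, e) ->
  exists pre x y rest, [/\ c = pre ++ x :: y :: rest, size pre = i & e = (x < y)].
Proof.
case/andP => /= Hs /eqP ->.
exists (take i c), (nth 0 c i), (nth 0 c i.+1), (drop i.+2 c); split => //.
- apply: (@eq_from_nth _ 0).
    rewrite size_cat /= size_takel ?size_drop; lia.
  move=> k Hk; rewrite nth_cat size_takel; last lia.
  case: (ltnP k i) => Hki; first by rewrite nth_take.
  case: (ltngtP k i) Hki => // [Hki|<-] _; last by rewrite subnn.
  case: (ltngtP k i.+1) Hki => [|Hki|->] Hki'; [lia| |by rewrite subSnn].
  have -> : k - i = (k - i.+2).+2 by lia.
  by rewrite /= nth_drop; congr nth; lia.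
- rewrite size_takel //; lia.
Qed.

Lemma size_swap c i : i.+1 < size c -> size (swap c i) = size c.
Proof. move=> H; rewrite /swap size_cat /= size_takel ?size_drop; lia. Qed.

Lemma perm_swap (pre : seq nat) x y rest : perm_eq (pre ++ x :: y :: rest) (pre ++ y :: x :: rest).
Proof. by rewrite perm_cat2l -cat1s -(cat1s y) perm_catCA perm_refl. Qed.

Lemma lay_wf c w : lay c w -> braid_wf (size c) w.
Proof.
elim: w c => //= g w IH c /andP[Hg Hw].
case: g Hg Hw => i e Hg Hw; have Hs := Hg; case/andP: Hs => /= Hs _.
rewrite Hs /=; have := IH _ Hw; by rewrite size_swap.
Qed.

Lemma lay_cat c u v : lay c (u ++ v) = lay c u && lay (run c u) v.
Proof. by elim: u c => //= g u IH c; rewrite IH andbA. Qed.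

Lemma run_cat c u v : run c (u ++ v) = run (run c u) v.
Proof. by elim: u c => //= g u IH c. Qed.

Fixpoint mn (c : seq nat) : nat :=
  if c is a :: c' then (if c' is [::] then a else minn a (mn c')) else 0.

Lemma mn_in c : c != [::] -> mn c \in c.
Proof.
elim: c => //= a [|b c] IH _; first by rewrite inE.
have {IH} IH := IH isT; rewrite /minn; case: ifP => _; rewrite inE ?eqxx //.
by rewrite IH orbT.
Qed.

Lemma mn_le c x : x \in c -> mn c <= x.
Proof.
elim: c => //= a [|b c] IH; first by rewrite inE => /eqP ->.
rewrite inE => /orP[/eqP ->|/IH H]; first exact: geq_minl.
exact: leq_trans (geq_minr _ _) H.
Qed.

Lemma mn_perm c c' : perm_eq c c' -> c != [::] -> mn c = mn c'.
Proof.
move=> P ne; have ne' : c' != [::] by move: ne; rewrite -!size_eq0 (perm_size P).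
apply/eqP; rewrite eqn_leq; apply/andP; split; apply: mn_le.
- by rewrite (perm_mem P) mn_in.
- by rewrite -(perm_mem P) mn_in.
Qed.

Lemma rem_catl (x : nat) s1 s2 : x \in s1 -> rem x (s1 ++ s2) = rem x s1 ++ s2.
Proof.
elim: s1 => //= a s1 IH; rewrite inE => H; case: eqP => // ne.
rewrite IH //; case/orP: H => // /eqP E; by case: ne.
Qed.

Lemma rem_catr (x : nat) s1 s2 : x \notin s1 -> rem x (s1 ++ s2) = s1 ++ rem x s2.
Proof.
elim: s1 => //= a s1 IH; rewrite inE negb_or eq_sym; case/andP=> /negbTE -> H.
by rewrite IH.
Qed.

Fixpoint bsf (k : nat) (c : seq nat) : seq gen :=
  if k is k'.+1 then mv (index (mn c) c) ++ shiftw 1 (bsf k' (rem (mn c) c)) else [::].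
Definition bs c := bsf (size c) c.

Lemma bs_cons c : c != [::] -> bs c = mv (index (mn c) c) ++ shiftw 1 (bs (rem (mn c) c)).
Proof.
move=> ne; rewrite /bs (size_rem (mn_in ne)).
by case: c ne => //= a c _.
Qed.

Lemma bs_wf c : braid_wf (size c) (bs c).
Proof.
move: {2}(size c) (erefl (size c)) => k; elim: k c => [|k IH] c Hc.
  by case: c Hc.
have ne : c != [::] by case: c Hc.
rewrite bs_cons // wf_cat mv_wf ?index_mem ?mn_in //=.
have Hr : size (rem (mn c) c) = k by rewrite size_rem ?mn_in // Hc.
have := shiftw_wf 1 (IH _ Hr); rewrite Hr Hc addn1; exact.
Qed.


Lemma wf_sbs c' m : size c' + 1 = m -> braid_wf m (shiftw 1 (bs c')).
Proof. move=> <-; exact: shiftw_wf (bs_wf c'). Qed.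

Lemma finish m p i e j S1 S2 : beq m ((j, e) :: S1) S2 ->
  beq m ((i, e) :: mv p) (mv p ++ [:: (j, e)]) -> braid_wf m S1 -> p < m ->
  beq m ((i, e) :: mv p ++ S1) (mv p ++ S2).
Proof.
move=> H1 H2 w1 hp.
apply: (@beq_trans _ _ ((mv p ++ [:: (j, e)]) ++ S1)).
  exact: (@beq_congr m ((i, e) :: mv p) _ S1 H2 w1).
rewrite -catA; apply: beq_congl H1 _; exact: mv_wf.
Qed.

Lemma key_aux k : forall c i e, size c = k -> uniq c -> cons_ok c (i, e) ->
  beq (size c) ((i, e) :: bs (swap c i)) (bs c).
Proof.
elim: k => [|k IH] c i e Hk Uc Hok.
  by case/andP: Hok; rewrite Hk.
have [pre [x [y [rest [Ec Hi Ee]]]]] := cons_ok_inv Hok.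
have ne : c != [::] by rewrite Ec; case: pre {Ec Hi}.
have Esw : swap c i = pre ++ y :: x :: rest by rewrite Ec -Hi swap_cat.
have Psw : perm_eq c (swap c i) by rewrite Esw Ec perm_swap.
have nesw : swap c i != [::] by rewrite Esw; case: pre {Ec Hi Esw Psw}.
have Usw : uniq (swap c i) by rewrite -(perm_uniq Psw).
have Emn : mn (swap c i) = mn c by rewrite (mn_perm Psw).
rewrite (bs_cons ne) (bs_cons nesw) Emn.
set t := mn c.
have tc : t \in c := mn_in ne.
have tle : forall z, z \in c -> t <= z := fun z => @mn_le c z.
have Sc : size c = size pre + (size rest).+2 by rewrite Ec size_cat.
move: (Uc); rewrite {1}Ec cat_uniq /= !inE !negb_or => /and5P[Upre /and3P[xpre ypre hr] /andP[xy xrest] yrest Urest].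
have tc' := tc; rewrite Ec mem_cat !inE in tc'.
case/orP: tc' => [tpre|/or3P[/eqP tx|/eqP ty|trest]].
-
  have Hp : index t pre < i by rewrite -Hi index_mem.
  have E1 : index t (swap c i) = index t pre by rewrite Esw index_cat tpre.
  have E2 : index t c = index t pre by rewrite Ec index_cat tpre.
  set pre' := rem t pre.
  have E3 : rem t (swap c i) = pre' ++ y :: x :: rest by rewrite Esw rem_catl.
  have E4 : rem t c = pre' ++ x :: y :: rest by rewrite Ec rem_catl.
  rewrite E1 E2 E3 E4.
  have Sp' : size pre' = i.-1 by rewrite size_rem // Hi.
  have ipos : 0 < i := leq_ltn_trans (leq0n _) Hp.
  set c' := pre' ++ x :: y :: rest.
  have Sc' : size c' = k by rewrite /c' size_cat /= Sp'; clear -Hk Sc Hi ipos; lia.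
  have Uc' : uniq c' by rewrite /c' -E4; exact: rem_uniq.
  have Hok' : cons_ok c' (i.-1, e).
    rewrite /cons_ok /= /c' size_cat /= Sp' !nth_cat Sp' ltnn subnn.
    have -> : i.-1.+1 < i.-1 = false by clear -ipos; lia.
    have -> : i.-1.+1 - i.-1 = 1 by clear -ipos; lia.
    rewrite /= Ee eqxx andbT; clear -ipos; lia.
  have := IH c' i.-1 e Sc' Uc' Hok'.
  have -> : swap c' i.-1 = pre' ++ y :: x :: rest by rewrite -Sp' swap_cat.
  move/(beq_shift 1); rewrite Sc' /= !addn1 (prednK ipos) Hk => H.
  have Hs : size c = k.+1 by [].
  apply: finish H _ _ _.
  - apply: mv_far => //; clear -Hk Sc Hi; lia.
  - have := shiftw_wf 1 (bs_wf (pre' ++ y :: x :: rest)).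
    by rewrite size_cat /= Sp' addn1; have -> : (i.-1 + (size rest).+2).+1 = k.+1 by clear -Hk Sc Hi ipos; lia.
  - clear -Hk Sc Hi Hp; lia.
-
  subst x.
  have tpre : t \notin pre := xpre.
  have ty : t != y := xy.
  have ty1 : (t == y) = false by apply/negbTE.
  have ty2 : (y == t) = false by rewrite eq_sym ty1.
  have E1 : index t (swap c i) = i.+1.
    by rewrite Esw index_cat (negbTE tpre) /= ?ty1 ?ty2 eqxx Hi addn1.
  have E2 : index t c = i by rewrite Ec index_cat (negbTE tpre) /= eqxx Hi addn0.
  have E3 : rem t (swap c i) = pre ++ y :: rest.
    by rewrite Esw rem_catr //= ?ty1 ?ty2 eqxx.
  have E4 : rem t c = pre ++ y :: rest by rewrite Ec rem_catr //= eqxx.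
  have Hee : e = true.
    by rewrite Ee ltn_neqAle xy tle // Ec mem_cat !inE eqxx !orbT.
  rewrite E1 E2 E3 E4 Hee /=.
  have Hic : i.+1 < size c by rewrite Sc Hi; clear; lia.
  have W1 : braid_wf (size c) (mv i) by apply: mv_wf; clear -Hic; lia.
  have W2 : braid_wf (size c) (shiftw 1 (bs (pre ++ y :: rest))).
    by apply: wf_sbs; rewrite Sc size_cat /= Hi; clear; lia.
  apply: (@beq_cancel (size c) i true [::] (mv i ++ shiftw 1 (bs (pre ++ y :: rest)))) => //.
  by rewrite wf_cat W1 W2.
-
  subst y.
  have tpre : t \notin pre := ypre.
  have tx1 : (x == t) = false by apply/negbTE.
  have tx2 : (t == x) = false by rewrite eq_sym tx1.
  have E1 : index t (swap c i) = i.
    by rewrite Esw index_cat (negbTE tpre) /= eqxx Hi addn0.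
  have E2 : index t c = i.+1.
    by rewrite Ec index_cat (negbTE tpre) /= ?tx1 ?tx2 eqxx Hi addn1.
  have E3 : rem t (swap c i) = pre ++ x :: rest.
    by rewrite Esw rem_catr //= eqxx.
  have E4 : rem t c = pre ++ x :: rest by rewrite Ec rem_catr //= ?tx1 ?tx2 eqxx.
  have Hee : e = false.
    by apply/negbTE; rewrite Ee -leqNgt tle // Ec mem_cat !inE eqxx !orbT.
  rewrite E1 E2 E3 E4 Hee /=; exact: beq_refl.
-
  have tpre : t \notin pre by apply: contraNN hr => tp; apply/hasP; exists t.
  have tx : t != x by apply: contraNN xrest => /eqP <-.
  have ty : t != y by apply: contraNN yrest => /eqP <-.
  have ty1 : (t == y) = false by apply/negbTE.
  have ty2 : (y == t) = false by rewrite eq_sym ty1.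
  have tx1 : (t == x) = false by apply/negbTE.
  have tx2 : (x == t) = false by rewrite eq_sym tx1.
  set rest' := rem t rest.
  have E1 : index t (swap c i) = i.+2 + index t rest.
    by rewrite Esw index_cat (negbTE tpre) /= ?ty1 ?ty2 ?tx1 ?tx2 Hi; clear; lia.
  have E2 : index t c = i.+2 + index t rest.
    by rewrite Ec index_cat (negbTE tpre) /= ?ty1 ?ty2 ?tx1 ?tx2 Hi; clear; lia.
  have E3 : rem t (swap c i) = pre ++ y :: x :: rest'.
    by rewrite Esw rem_catr //= ?ty1 ?ty2 ?tx1 ?tx2.
  have E4 : rem t c = pre ++ x :: y :: rest'.
    by rewrite Ec rem_catr //= ?ty1 ?ty2 ?tx1 ?tx2.
  rewrite E1 E2 E3 E4.
  have Sr' : size rest' = (size rest).-1 by rewrite size_rem.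
  have rpos : 0 < size rest by case: (rest) trest.
  set c' := pre ++ x :: y :: rest'.
  have Sc' : size c' = k by rewrite /c' size_cat /= Sr'; clear -Hk Sc rpos; lia.
  have Uc' : uniq c' by rewrite /c' -E4; exact: rem_uniq.
  have Hok' : cons_ok c' (i, e).
    rewrite /cons_ok /= /c' size_cat /= !nth_cat Hi ltnn subnn.
    have -> : i.+1 < i = false by clear; lia.
    have -> : i.+1 - i = 1 by clear; lia.
    rewrite /= Ee eqxx andbT; clear; lia.
  have := IH c' i e Sc' Uc' Hok'.
  have -> : swap c' i = pre ++ y :: x :: rest' by rewrite -Hi swap_cat.
  move/(beq_shift 1); rewrite Sc' [shiftw _ (_ :: _)]/= !addn1 Hk => H.
  have Hir : index t rest < size rest by rewrite index_mem.
  apply: finish H _ _ _.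
  - apply: mv_near; clear -Hk Sc Hi Hir; lia.
  - apply: wf_sbs; rewrite size_cat /= Sr'; clear -Hk Sc rpos; lia.
  - clear -Hk Sc Hi Hir; lia.
Qed.



Lemma layK c w : uniq c -> lay c w -> beq (size c) (w ++ bs (run c w)) (bs c).
Proof.
elim: w c => [|g w IH] c Uc /=; first by move=> _; exact: beq_refl.
case/andP; case: g => i e Hok Hl.
have [pre [x [y [rest [Ec Hi Ee]]]]] := cons_ok_inv Hok.
have Esw : swap c i = pre ++ y :: x :: rest by rewrite Ec -Hi swap_cat.
have Psw : perm_eq c (swap c i) by rewrite Esw Ec perm_swap.
have Usw : uniq (swap c i) by rewrite -(perm_uniq Psw).
have Ssw : size (swap c i) = size c by rewrite (perm_size Psw).
have H := IH _ Usw Hl; rewrite Ssw in H.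
apply: beq_trans (key_aux (erefl _) Uc Hok).
have Hic : i.+1 < size c by case/andP: Hok.
apply: (@beq_congl _ [:: (i, e)] _ _ H); rewrite /= Hic //.
Qed.

Lemma layered_eq c w1 w2 : uniq c -> lay c w1 -> lay c w2 -> run c w1 = run c w2 ->
  beq (size c) w1 w2.
Proof.
move=> Uc L1 L2 E.
apply: (@beq_rcancel _ _ _ (bs (run c w1))); last first.
- have := bs_wf (run c w1); suff -> : size (run c w1) = size c by [].
  elim: w1 c Uc L1 {L2 E} => //= [[i e]] w IH c Uc /andP[Hok Hl].
  have Hic : i.+1 < size c by case/andP: Hok.
  have [pre [x [y [rest [Ec Hi Ee]]]]] := cons_ok_inv Hok.
  have Psw : perm_eq c (swap c i) by rewrite Ec -Hi swap_cat perm_swap.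
  rewrite IH ?(perm_size Psw) // -(perm_uniq Psw) //.
- exact: lay_wf.
- exact: lay_wf.
apply: beq_trans (layK Uc L1) _; rewrite E; apply: beq_sym; exact: layK.
Qed.


Fixpoint oiso (s xs : seq nat) : bool :=
  match s, xs with
  | [::], [::] => true
  | a :: s', x :: xs' => all2 (fun b y => (a < b) == (x < y)) s' xs' && oiso s' xs'
  | _, _ => false
  end.

Lemma cons_ok_cat pre x y r e :
  cons_ok (pre ++ x :: y :: r) (size pre, e) = (e == (x < y)).
Proof.
rewrite /cons_ok /= size_cat /= !nth_cat ltnn subnn.
have -> : (size pre).+1 < size pre = false by lia.
have -> : (size pre).+1 - size pre = 1 by lia.
have -> : (size pre).+1 < size pre + (size r).+2 by lia.
by [].
Qed.

Lemma bubble_lay a x post bs : forall pre ys, all2 (fun b y => (a < b) == (x < y)) bs ys ->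
  lay (pre ++ x :: ys ++ post) (bubble (size pre) a bs) /\
  run (pre ++ x :: ys ++ post) (bubble (size pre) a bs) = pre ++ ys ++ x :: post.
Proof.
elim: bs => [|b bs IH] pre [|y ys] //= /andP[/eqP Hb Hr].
have Hs : size (pre ++ [:: y]) = (size pre).+1 by rewrite size_cat addn1.
have [H1 H2] := IH (pre ++ [:: y]) ys Hr.
rewrite -catA /= Hs in H1 H2.
rewrite swap_cat cons_ok_cat Hb eqxx H1 H2 -catA; split => //.
Qed.

Lemma mcross_lay s : forall pre xs post, oiso s xs ->
  lay (pre ++ xs ++ post) (mcross_word (size pre) s) /\
  run (pre ++ xs ++ post) (mcross_word (size pre) s) = pre ++ rev xs ++ post.
Proof.
elim: s => [|a s IH] pre [|x xs] post //= /andP[Hr Ho].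
have [B1 B2] := bubble_lay post pre Hr.
have [M1 M2] := IH pre xs (x :: post) Ho.
rewrite lay_cat run_cat B1 B2 M1 M2; split => //.
by rewrite rev_cons cat_rcons.
Qed.

Lemma oiso_refl s : oiso s s.
Proof.
elim: s => //= a s ->; rewrite andbT.
by elim: s => //= b s ->; rewrite eqxx.
Qed.

Lemma bubble_shift j k a s : bubble (k + j) a s = shiftw j (bubble k a s).
Proof. by elim: s k => //= b s IH k; rewrite -addSn IH. Qed.

Lemma mcross_shift j k s : mcross_word (k + j) s = shiftw j (mcross_word k s).
Proof. by elim: s => //= a s IH; rewrite shiftw_cat IH bubble_shift. Qed.


Definition rkf (xs : seq nat) (x : nat) : nat := (count (fun y => y < x) xs).+1.
Definition rk (xs : seq nat) : seq nat := map (rkf xs) xs.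

Lemma count_split (T : Type) (p q : pred T) s : (forall y, p y -> q y) ->
  count q s = count p s + count (fun y => q y && ~~ p y) s.
Proof.
move=> H; elim: s => //= y s ->.
case Py: (p y); case Qy: (q y) => //=; try lia.
by rewrite (H _ Py) in Qy.
Qed.

Lemma rkf_lt xs a b : a \in xs -> (rkf xs a < rkf xs b) = (a < b).
Proof.
move=> Ha; rewrite /rkf ltnS.
case: (ltnP a b) => Hab.
- rewrite (@count_split _ (fun y => y < a) (fun y => y < b)); last by move=> y /ltn_trans; apply.
  have : 0 < count (fun y => (y < b) && ~~ (y < a)) xs.
    by rewrite -has_count; apply/hasP; exists a => //; rewrite Hab ltnn.
  lia.
- apply/negbTE; rewrite -leqNgt; apply: sub_count => y /= H; exact: leq_trans H Hab.
Qed.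

Lemma oiso_map f xs : (forall a b, a \in xs -> b \in xs -> (f a < f b) = (a < b)) ->
  oiso (map f xs) xs.
Proof.
elim: xs => //= a xs IH H; apply/andP; split.
- have : forall b, b \in xs -> (f a < f b) = (a < b).
    by move=> b Hb; apply: H; rewrite inE ?eqxx ?Hb ?orbT.
  elim: xs {IH H} => //= b xs IH H'; rewrite H' ?mem_head // eqxx /=.
  by apply: IH => c Hc; apply: H'; rewrite inE Hc orbT.
- by apply: IH => c d Hc Hd; apply: H; rewrite inE ?Hc ?Hd orbT.
Qed.

Lemma oiso_rk xs : oiso (rk xs) xs.
Proof. apply: oiso_map => a b Ha _; exact: rkf_lt. Qed.

Lemma rk_perm xs : uniq xs -> perm_eq (rk xs) (iota 1 (size xs)).
Proof.
move=> U.
have Urk : uniq (rk xs).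
  rewrite map_inj_in_uniq // => a b Ha Hb E.
  case: (ltngtP a b) => // H.
  - by move: H; rewrite -(@rkf_lt xs a b Ha) E ltnn.
  - by move: H; rewrite -(@rkf_lt xs b a Hb) E ltnn.
apply: uniq_perm => //; first exact: iota_uniq.
apply: (uniq_min_size Urk _ _).2.
- move=> z /mapP [x Hx ->]; rewrite mem_iota /rkf ltnS /= add1n ltnS.
  have : count (fun y => y < x) xs + count (predC (fun y => y < x)) xs = size xs by rewrite count_predC.
  have : 0 < count (predC (fun y => y < x)) xs.
    by rewrite -has_count; apply/hasP; exists x => //=; rewrite ltnn.
  by move=> A <-; rewrite -[X in X < _]addn0 ltn_add2l.
- by rewrite size_iota size_map.
Qed.

Definition wrev (k len : nat) (l : seq nat) : seq nat :=
  take k l ++ rev (take len (drop k l)) ++ drop (k + len) l.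

Lemma wrev_cat P X Q len : size X = len -> wrev (size P) len (P ++ X ++ Q) = P ++ rev X ++ Q.
Proof.
move=> <-; rewrite /wrev take_size_cat // drop_size_cat // take_size_cat //.
by rewrite drop_cat ltnNge leq_addr /= addKn drop_size_cat.
Qed.

Lemma decomp3 (c : seq nat) k len : k + len <= size c ->
  c = take k c ++ take len (drop k c) ++ drop (k + len) c.
Proof. by move=> _; rewrite addnC -drop_drop cat_take_drop cat_take_drop. Qed.

Fixpoint cl (n : nat) (c : seq nat) (ks : seq nat) : seq (nat * seq nat) :=
  if ks is k :: ks' then (k, rk (take n (drop k c))) :: cl n (wrev k n c) ks' else [::].

Definition Fw n (c : seq nat) (ks : seq nat) := foldl (fun l k => wrev k n l) c ks.

Lemma wrev_perm (c : seq nat) k n : perm_eq (wrev k n c) c.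
Proof.
rewrite /wrev; set A := take k c; set B := take n (drop k c); set C := drop (k + n) c.
have E : c = A ++ B ++ C by rewrite /A /B /C addnC -drop_drop !cat_take_drop.
rewrite [X in perm_eq _ X]E perm_cat2l perm_cat2r.
by rewrite perm_rev.
Qed.

Lemma cl_lay n ks : forall c, uniq c -> all (fun k => k + n <= size c) ks ->
  lay c (ncb_word (cl n c ks)) /\ run c (ncb_word (cl n c ks)) = Fw n c ks.
Proof.
elim: ks => [|k ks IH] c Uc /=; first by [].
case/andP=> Hk Hks.
set A := take k c; set X := take n (drop k c); set C := drop (k + n) c.
have E : c = A ++ X ++ C by exact: decomp3.
have SA : size A = k by rewrite size_takel //; exact: leq_trans (leq_addr n k) Hk.
have [L1 R1] := mcross_lay A C (oiso_rk X).
rewrite -E SA in L1 R1.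
have P := wrev_perm c k n.
have Uw : uniq (wrev k n c) by rewrite (perm_uniq P).
have Hks' : all (fun k0 => k0 + n <= size (wrev k n c)) ks by rewrite (perm_size P).
have [L2 R2] := IH _ Uw Hks'.
rewrite lay_cat run_cat L1 R1 /=.
by [].
Qed.

Lemma cl_valid n m j ks : forall c, uniq c -> all (fun k => k + n <= size c) ks ->
  size c + j <= m ->
  all (valid_ncross n m) [seq (kk.1 + j, kk.2) | kk <- cl n c ks].
Proof.
elim: ks => [|k ks IH] c Uc //= /andP[Hk Hks] Hm.
have P := wrev_perm c k n.
apply/andP; split; last first.
  apply: IH; rewrite ?(perm_uniq P) ?(perm_size P) //.
rewrite /valid_ncross /=; apply/andP; split; first by clear -Hk Hm; lia.
have SX : size (take n (drop k c)) = n.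
  by rewrite size_takel // size_drop leq_subRL // (leq_trans (leq_addr n k) Hk).
rewrite -{2}SX; apply: rk_perm; apply: take_uniq; exact: drop_uniq.
Qed.


Definition ksR (h k : nat) : seq nat := flatten (nseq h [:: k; k.+1]) ++ [:: k].
Fixpoint passk (h o r : nat) : seq nat :=
  if r is r'.+1 then o :: passk h (o + h) r' else ksR h o.
Definition KS (h : nat) : seq nat :=
  passk h 0 4 ++ passk h 0 3 ++ passk h 0 2 ++ passk h 0 1 ++ passk h 0 0.

Lemma Fw_cat n c a b : Fw n c (a ++ b) = Fw n (Fw n c a) b.
Proof. exact: foldl_cat. Qed.

Lemma Fw_cons n c k a : Fw n c (k :: a) = Fw n (wrev k n c) a.
Proof. by []. Qed.

Lemma split_last2 (Y : seq nat) m : size Y = m.+2 ->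
  exists Y' a b, Y = Y' ++ [:: a; b] /\ size Y' = m.
Proof.
case/lastP: Y => [|Y1 b] //; case/lastP: Y1 => [|Y' a] //.
rewrite !size_rcons => [[E]]; exists Y', a, b; split => //.
by rewrite -!cats1 -catA.
Qed.

Lemma pair_ok n (P u Q : seq nat) a b : size u + 1 = n ->
  Fw n (P ++ (u ++ [:: a; b]) ++ Q) [:: size P; (size P).+1] = P ++ (a :: b :: u) ++ Q.
Proof.
move=> Hu; rewrite /= /Fw /=.
have -> : P ++ (u ++ [:: a; b]) ++ Q = P ++ (u ++ [:: a]) ++ (b :: Q) by rewrite -!catA.
rewrite wrev_cat ?size_cat ?addn1 -?Hu ?addn1 // rev_cat /=.
have -> : P ++ a :: rev u ++ b :: Q = (P ++ [:: a]) ++ (rev u ++ [:: b]) ++ Q by rewrite -!catA.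
have -> : (size P).+1 = size (P ++ [:: a]) by rewrite size_cat addn1.
rewrite wrev_cat ?size_cat ?size_rev ?addn1 -?Hu ?addn1 // rev_cat revK /=.
by rewrite -catA.
Qed.

Lemma rot_ok n j : forall (P X Y Q : seq nat), size X + size Y = n.+1 -> size Y = j.*2 ->
  Fw n (P ++ (X ++ Y) ++ Q) (flatten (nseq j [:: size P; (size P).+1])) = P ++ (Y ++ X) ++ Q.
Proof.
elim: j => [|j IH] P X Y Q HS HY.
  by case: Y HS HY => //= _ _; rewrite cats0.
rewrite doubleS in HY; have [Y' [a [b [EY HY']]]] := split_last2 HY; subst Y.
have -> : forall s : seq nat, flatten (nseq j.+1 s) = s ++ flatten (nseq j s) by [].
rewrite Fw_cat.
have -> : X ++ Y' ++ [:: a; b] = (X ++ Y') ++ [:: a; b] by rewrite catA.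
rewrite pair_ok; last by move: HS; rewrite !size_cat /= HY'; clear; lia.
have -> : a :: b :: X ++ Y' = ([:: a; b] ++ X) ++ Y' by [].
rewrite IH //; last by move: HS; rewrite !size_cat /= HY'; clear; lia.
by rewrite -!catA.
Qed.

Lemma R_ok h (P M Q : seq nat) : 0 < h -> size M = (h + h).+1 ->
  Fw (h + h) (P ++ M ++ Q) (ksR h (size P)) = P ++ rev M ++ Q.
Proof.
move=> hp; case: M => [|x Y] //= [HY].
rewrite /ksR Fw_cat.
rewrite -[x :: Y ++ Q]/(([:: x] ++ Y) ++ Q).
rewrite (@rot_ok (h + h) h) //=; last 2 first; [by rewrite HY|by rewrite HY; clear; lia|].
by rewrite /Fw /= -catA wrev_cat // rev_cons -cats1 -catA.
Qed.

Lemma SW_ok n (P X Y Q : seq nat) : size X + size Y = n ->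
  Fw n (P ++ (X ++ Y) ++ Q) [:: size P] = P ++ (rev Y ++ rev X) ++ Q.
Proof. by move=> H; rewrite /Fw /= wrev_cat ?size_cat // rev_cat. Qed.

Lemma RW_ok h (P X Y Q : seq nat) : 0 < h -> size X + size Y = (h + h).+1 ->
  Fw (h + h) (P ++ (X ++ Y) ++ Q) (ksR h (size P)) = P ++ (rev Y ++ rev X) ++ Q.
Proof. by move=> hp H; rewrite R_ok ?size_cat // rev_cat. Qed.

Lemma pass_ok h Ys : 0 < h -> forall (P X Z Q : seq nat), all (fun Y : seq nat => size Y == h) Ys ->
  size X = h -> size Z = h.+1 ->
  Fw (h + h) (P ++ X ++ flatten Ys ++ Z ++ Q) (passk h (size P) (size Ys)) =
  P ++ flatten (map rev Ys) ++ rev Z ++ (if odd (size Ys) then X else rev X) ++ Q.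
Proof.
move=> hp; elim: Ys => [|Y Ys IH] P X Z Q /=.
  move=> _ HX HZ; rewrite [X ++ Z ++ Q]catA RW_ok ?HX ?HZ //; first by rewrite -catA.
  by rewrite addnS.
case/andP => /eqP HY HYs HX HZ.
have -> : P ++ X ++ (Y ++ flatten Ys) ++ Z ++ Q = P ++ (X ++ Y) ++ (flatten Ys ++ Z ++ Q) by rewrite -!catA.
rewrite wrev_cat ?size_cat ?HX ?HY // rev_cat.
have -> : P ++ (rev Y ++ rev X) ++ flatten Ys ++ Z ++ Q = (P ++ rev Y) ++ rev X ++ flatten Ys ++ Z ++ Q by rewrite -!catA.
have -> : size P + h = size (P ++ rev Y) by rewrite size_cat size_rev HY.
rewrite IH // ?size_rev // -!catA.
by case: (odd (size Ys)) => //=; rewrite revK.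
Qed.

Lemma split_at (l : seq nat) a b : size l = a + b ->
  exists A B, [/\ l = A ++ B, size A = a & size B = b].
Proof.
move=> H; exists (take a l), (drop a l); split; first by rewrite cat_take_drop.
- by rewrite size_takel // H leq_addr.
- by rewrite size_drop H addKn.
Qed.

Lemma all_ksR (p : pred nat) h k : p k -> p k.+1 -> all p (ksR h k).
Proof.
move=> H1 H2; rewrite /ksR all_cat.
suff -> : all p (flatten (nseq h [:: k; k.+1])) by rewrite /= H1.
by elim: h => //= h ->; rewrite H1 H2.
Qed.

Lemma passk_le h r : forall o, all (fun k => k <= o + r * h + 1) (passk h o r).
Proof.
elim: r => [|r IH] o /=.
  by apply: all_ksR; lia.
apply/andP; split; first lia.
by apply: sub_all (IH (o + h)) => k /=; rewrite mulSn; lia.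
Qed.

Arguments Fw : simpl never.
Arguments passk : simpl never.
Arguments wrev : simpl never.

Lemma KS_rev h (l : seq nat) : 0 < h -> size l = 6 * h + 1 -> Fw (h + h) l (KS h) = rev l.
Proof.
move=> hp Hl.
have [B1 [l1 [E1 S1 Sl1]]] := @split_at l h (5 * h + 1) ltac:(rewrite Hl; lia).
have [B2 [l2 [E2 S2 Sl2]]] := @split_at l1 h (4 * h + 1) ltac:(rewrite Sl1; lia).
have [B3 [l3 [E3 S3 Sl3]]] := @split_at l2 h (3 * h + 1) ltac:(rewrite Sl2; lia).
have [B4 [l4 [E4 S4 Sl4]]] := @split_at l3 h (2 * h + 1) ltac:(rewrite Sl3; lia).
have [B5 [B6 [E5 S5 S6]]] := @split_at l4 h (h + 1) ltac:(rewrite Sl4; lia).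
subst l l1 l2 l3 l4.
rewrite addn1 in S6.
rewrite /KS (Fw_cat _ _ (passk h 0 4)) (Fw_cat _ _ (passk h 0 3)) (Fw_cat _ _ (passk h 0 2)) (Fw_cat _ _ (passk h 0 1)).
have := @pass_ok h [:: B2; B3; B4; B5] hp [::] B1 B6 [::].
rewrite /= S2 S3 S4 S5 eqxx => /(_ isT S1 S6).
rewrite !cats0 -?catA => ->.
have := @pass_ok h [:: rev B3; rev B4; rev B5] hp [::] (rev B2) (rev B6) (rev B1).
rewrite /= !size_rev S3 S4 S5 S2 S6 eqxx => /(_ isT erefl erefl).
rewrite !revK !cats0 -?catA => ->.
have := @pass_ok h [:: B4; B5] hp [::] B3 B6 (rev B2 ++ rev B1).
rewrite /= S4 S5 eqxx => /(_ isT S3 S6).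
rewrite !cats0 -?catA => ->.
have := @pass_ok h [:: rev B5] hp [::] (rev B4) (rev B6) (rev B3 ++ rev B2 ++ rev B1).
rewrite /= !size_rev S5 S4 S6 eqxx => /(_ isT erefl erefl).
rewrite !revK !cats0 -?catA => ->.
have := @pass_ok h [::] hp [::] B5 B6 (rev B4 ++ rev B3 ++ rev B2 ++ rev B1).
rewrite /= => /(_ isT S5 S6) ->.
by rewrite !rev_cat -!catA.
Qed.

Lemma KS_all h : all (fun k => k + (h + h) <= size (iota 0 (6 * h + 1))) (KS h).
Proof.
rewrite size_iota /KS (all_cat _ (passk h 0 4)) (all_cat _ (passk h 0 3)) (all_cat _ (passk h 0 2)) (all_cat _ (passk h 0 1)).
have F : forall r, r <= 4 -> all (fun k => k + (h + h) <= 6 * h + 1) (passk h 0 r).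
  move=> r Hr; apply: sub_all (passk_le h r 0) => k /= Hk.
  have : r * h <= 4 * h by rewrite leq_mul2r Hr orbT.
  lia.
by rewrite !F.
Qed.


Definition conv h (c : nat * seq nat) : seq (nat * seq nat) :=
  [seq (kk.1 + c.1, kk.2) | kk <- cl (h + h) c.2 (KS h)].

Lemma ncb_word_cat xs ys : ncb_word (xs ++ ys) = ncb_word xs ++ ncb_word ys.
Proof. by rewrite /ncb_word map_cat flatten_cat. Qed.

Lemma ncb_word_cons c cs : ncb_word (c :: cs) = mcross_word c.1 c.2 ++ ncb_word cs.
Proof. by []. Qed.

Lemma ncb_word_shift j cs :
  ncb_word [seq (kk.1 + j, kk.2) | kk <- cs] = shiftw j (ncb_word cs).
Proof.
elim: cs => // kk cs IH.
by rewrite map_cons !ncb_word_cons IH shiftw_cat mcross_shift.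
Qed.

Lemma wf_mono m m' w : braid_wf m w -> m <= m' -> braid_wf m' w.
Proof. by move=> H le; apply: sub_all H => g /= /leq_trans; apply. Qed.

Lemma one_cross h j s m : 0 < h -> perm_eq s (iota 1 (6 * h + 1)) -> j + (6 * h + 1) <= m ->
  [/\ beq m (ncb_word (conv h (j, s))) (mcross_word j s),
      all (valid_ncross (h + h) m) (conv h (j, s)) &
      braid_wf m (mcross_word j s)].
Proof.
move=> hp Ps Hm.
have Us : uniq s by rewrite (perm_uniq Ps) iota_uniq.
have Ss : size s = 6 * h + 1 by rewrite (perm_size Ps) size_iota.
have Ks : all (fun k => k + (h + h) <= size s) (KS h).
  by have := KS_all h; rewrite size_iota Ss.
have [L1 R1] := cl_lay Us Ks.
rewrite KS_rev // in R1.
have [L2 R2] := mcross_lay [::] [::] (oiso_refl s).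
rewrite /= !cats0 in L2 R2.
have B := layered_eq Us L1 L2 (etrans R1 (esym R2)).
have W := lay_wf L2.
have Hm' : size s + j <= m by rewrite Ss addnC.
split.
- rewrite /conv ncb_word_shift -[j]add0n mcross_shift.
  apply: beq_mono (beq_shift j B) Hm'.
- rewrite /conv; exact: cl_valid.
- rewrite -[j]add0n mcross_shift; apply: wf_mono (shiftw_wf j W) Hm'.
Qed.

Lemma all_cross h m cs : 0 < h -> all (valid_ncross (3 * (h + h) + 1) m) cs ->
  [/\ beq m (ncb_word (flatten (map (conv h) cs))) (ncb_word cs),
      all (valid_ncross (h + h) m) (flatten (map (conv h) cs)) &
      braid_wf m (ncb_word cs)].
Proof.
move=> hp; elim: cs => [|[j s] cs IH]; first by move=> _; split => //; exact: beq_refl.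
move=> /andP [/andP [Hj Ps] Hall]; rewrite /= in Hj.
have -> : flatten (map (conv h) ((j, s) :: cs)) = conv h (j, s) ++ flatten (map (conv h) cs) by [].
have E : 3 * (h + h) + 1 = 6 * h + 1 by lia.
rewrite E in Hj Ps.
have [B1 V1 W1] := one_cross hp Ps Hj.
have [B2 V2 W2] := IH Hall.
rewrite ncb_word_cat all_cat V1 V2 ncb_word_cons.
split => //.
- have EW := beq_wf B2; apply: beq_cat B1 B2 W1 _; by rewrite EW.
- by rewrite wf_cat W1 W2.
Qed.

Unset Implicit Arguments.

Theorem corollary5p5 (m0 : nat) (w0 : seq gen) :
  0 < m0 -> braid_wf m0 w0 -> ~ is_unlink m0 w0 ->
  forall n : nat, ~~ odd n -> 2 <= n ->
  forall m : nat, ncb_closure (3 * n + 1) m m0 w0 ->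
  exists2 m' : nat, m' <= m & ncb_closure n m' m0 w0.
Proof.
move=> _ _ _ n ev n2 m [cs [mpos Hall Hmk]].
set h := n./2.
have En : n = h + h by rewrite addnn /h -[n in LHS](odd_double_half n) (negbTE ev).
have hp : 0 < h by move: n2; rewrite En; lia.
rewrite En in Hall *.
have [B V W] := all_cross hp Hall.
exists m => //; exists (flatten (map (conv h) cs)); split => //.
apply: mk_trans (beq_markov B) Hmk.
Qed.
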